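(* Assume Assumptions 1 (randomization), 2 (monotonicity) and 3 (homogeneity), and the positivity conditions $P(R=r)>0$ and $0<P(Z=1\mid R=r)<1$ for every $r$, and $P(U=u)>0$ for $u\in\{ss,s\bar{s},\bar{s}\bar{s}\}$. Then, for $u\in\{ss,s\bar{s},\bar{s}\bar{s}\}$: (a) if Assumption 4(a) holds, then $P(Y=1\mid Z=1,U=u)$ is identifiable for every such $u$; (b) if Assumption 4(b) holds, then $P(Y=1\mid Z=0,U=u)$ is identifiable for every such $u$; (c) if both Assumptions 4(a) and 4(b) hold, then $ACE_u$ is identifiable for every such $u$. Here a quantity is identifiable if any two joint distributions of $(R,Z,S(1),S(0),Y(1),Y(0))$ that satisfy the stated assumptions and induce the same distribution of the observed vector $(R,Z,S,Y)$ give the same value of that quantity.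
   Context: Setting: there are $N_R$ trials. A unit is described by a random vector $(R,Z,S(1),S(0),Y(1),Y(0))$, where $R\in\{1,\dots,N_R\}$ is the trial number, $Z\in\{0,1\}$ the treatment assignment, and $S(z),Y(z)\in\{0,1\}$ the potential surrogate and potential endpoint under treatment $z$. Observed: $S=ZS(1)+(1-Z)S(0)$, $Y=ZY(1)+(1-Z)Y(0)$. Principal stratum $U=(S(1),S(0))$ with values $(1,1),(1,0),(0,1),(0,0)$ labeled $ss,s\bar{s},\bar{s}s,\bar{s}\bar{s}$. $\pi_{ur}=P(U=u\mid R=r)$. Assumption 1 (randomization): $Z\perp\!\!\!\perp\{S(1),S(0),Y(1),Y(0)\}\mid R$. Assumption 2 (monotonicity): $S(1)\ge S(0)$ almost surely (so $\pi_{\bar{s}s,r}=0$ for all $r$). Assumption 3 (homogeneity): $R\perp\!\!\!\perp Y(z)\mid U$ for $z=0,1$. Under Assumptions 1 and 3, $ACE_{ur}=E\{Y(1)-Y(0)\mid U=u,R=r\}$ does not depend on $r$ and is denoted $ACE_u$; it equals $P(Y=1\mid Z=1,U=u)-P(Y=1\mid Z=0,U=u)$. Assumption 4(a): there exist trials $r_1,r_2$ with $\pi_{ss,r_1}\pi_{s\bar{s},r_2}\neq\pi_{ss,r_2}\pi_{s\bar{s},r_1}$. Assumption 4(b): there exist trials $r_3,r_4$ with $\pi_{s\bar{s},r_3}\pi_{\bar{s}\bar{s},r_4}\neq\pi_{s\bar{s},r_4}\pi_{\bar{s}\bar{s},r_3}$. *)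

(* Defs.v *)
From HB Require Import structures.
From mathcomp Require Import all_boot all_order all_algebra.
Set Implicit Arguments. Unset Strict Implicit. Unset Printing Implicit Defensive.
Import Order.TTheory GRing.Theory Num.Theory.
Local Open Scope ring_scope.

(* A unit: (R, Z, S(1), S(0), Y(1), Y(0)); trials 1..N_R are indexed by 'I_N
   (trial r+1 of the paper is the ordinal r). Booleans encode {0,1}. *)
Definition outcome (N : nat) : finType :=
  ('I_N * bool * bool * bool * bool * bool)%type.

Section Defs.
Variables (R : realFieldType) (N : nat).
Implicit Types (x : outcome N) (p : outcome N -> R).

Definition oR  x : 'I_N := x.1.1.1.1.1.
Definition oZ  x : bool := x.1.1.1.1.2.
Definition oS1 x : bool := x.1.1.1.2.
Definition oS0 x : bool := x.1.1.2.
Definition oY1 x : bool := x.1.2.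
Definition oY0 x : bool := x.2.
Definition oS x : bool := if oZ x then oS1 x else oS0 x.
Definition oY x : bool := if oZ x then oY1 x else oY0 x.
Definition oU x : bool * bool := (oS1 x, oS0 x).

Definition u_ss  : bool * bool := (true, true).
Definition u_ssb : bool * bool := (true, false).
Definition u_sbs : bool * bool := (false, true).
Definition u_sbsb : bool * bool := (false, false).

Definition is_dist p := (forall x, 0 <= p x) /\ \sum_x p x = 1.

Definition Pr p (A : pred (outcome N)) : R := \sum_(x | A x) p x.
Definition CPr p (A B : pred (outcome N)) : R :=
  Pr p (fun x => A x && B x) / Pr p B.

(* Assumption 1: Z independent of (S(1),S(0),Y(1),Y(0)) given R *)
Definition randomization p :=
  forall r z s1 s0 y1 y0,
    Pr p (fun x => [&& oR x == r, oZ x == z, oS1 x == s1, oS0 x == s0,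
                       oY1 x == y1 & oY0 x == y0]) * Pr p (fun x => oR x == r)
    = Pr p (fun x => (oR x == r) && (oZ x == z)) *
      Pr p (fun x => [&& oR x == r, oS1 x == s1, oS0 x == s0,
                         oY1 x == y1 & oY0 x == y0]).

Definition monotonicity p :=
  Pr p (fun x => ~~ (oS0 x <= oS1 x)%N) = 0.

Definition oYz (z : bool) x : bool := if z then oY1 x else oY0 x.

(* Assumption 3: R independent of Y(z) given U, for z = 0,1 *)
Definition homogeneity p :=
  forall (z : bool) r u y,
    Pr p (fun x => [&& oR x == r, oU x == u & oYz z x == y]) * Pr p (fun x => oU x == u)
    = Pr p (fun x => (oR x == r) && (oU x == u)) *
      Pr p (fun x => (oU x == u) && (oYz z x == y)).

Definition positivity p :=
  (forall r, 0 < Pr p (fun x => oR x == r)) /\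
  (forall r, 0 < CPr p (fun x => oZ x) (fun x => oR x == r) < 1) /\
  (forall u, u != u_sbs -> 0 < Pr p (fun x => oU x == u)).

Definition pi_ur p (u : bool * bool) (r : 'I_N) : R :=
  CPr p (fun x => oU x == u) (fun x => oR x == r).

Definition assump4a p :=
  exists r1 r2, pi_ur p u_ss r1 * pi_ur p u_ssb r2 != pi_ur p u_ss r2 * pi_ur p u_ssb r1.
Definition assump4b p :=
  exists r3 r4, pi_ur p u_ssb r3 * pi_ur p u_sbsb r4 != pi_ur p u_ssb r4 * pi_ur p u_sbsb r3.

Definition base_assumptions p :=
  [/\ is_dist p, randomization p, monotonicity p, homogeneity p & positivity p].

Definition same_observed p q :=
  forall r z s y,
    Pr p (fun x => [&& oR x == r, oZ x == z, oS x == s & oY x == y])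
    = Pr q (fun x => [&& oR x == r, oZ x == z, oS x == s & oY x == y]).

Definition identifiable (H : (outcome N -> R) -> Prop) (f : (outcome N -> R) -> R) :=
  forall p q, H p -> H q -> same_observed p q -> f p = f q.

Definition pY p (z : bool) (u : bool * bool) : R :=
  CPr p (fun x => oY x) (fun x => (oZ x == z) && (oU x == u)).

Definition ACE p (u : bool * bool) : R :=
  (\sum_(x | oU x == u) ((oY1 x)%:R - (oY0 x)%:R) * p x) / Pr p (fun x => oU x == u).

End Defs.

(* Main.v *)
Require Import Defs.
From HB Require Import structures.
From mathcomp Require Import all_boot all_order all_algebra ring.
Import Order.TTheory GRing.Theory Num.Theory.
Set Implicit Arguments. Unset Strict Implicit. Unset Printing Implicit Defensive.
Local Open Scope ring_scope.

Section Aux.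
Variables (R : realFieldType) (N : nat).
Implicit Types (p q : outcome N -> R).

Lemma Pr_ext p (A B : pred (outcome N)) : (forall x, A x = B x) -> Pr p A = Pr p B.
Proof. by move=> H; apply: eq_bigl. Qed.

Lemma Pr_bsplit p (A C : pred (outcome N)) :
  Pr p A = Pr p (fun x => A x && C x) + Pr p (fun x => A x && ~~ C x).
Proof. by rewrite /Pr (bigID C). Qed.

Lemma Pr_ge0 p A : is_dist p -> 0 <= Pr p A.
Proof. by case=> H _; apply: sumr_ge0 => x _. Qed.

Lemma Pr_le p (A B : pred (outcome N)) : is_dist p -> (forall x, A x -> B x) ->
  Pr p A <= Pr p B.
Proof.
case=> H _ AB; rewrite /Pr [X in _ <= X]big_mkcond [X in X <= _]big_mkcond.
apply: ler_sum => x _; case Ax: (A x); first by rewrite (AB _ Ax).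
by case: (B x).
Qed.

Lemma Pr_sub0 p (A B : pred (outcome N)) : is_dist p -> Pr p B = 0 ->
  (forall x, A x -> B x) -> Pr p A = 0.
Proof.
move=> Hd HB AB; apply/eqP; rewrite eq_le Pr_ge0 // andbT -HB.
exact: Pr_le.
Qed.

Lemma Pr_split (T : finType) p (A : pred (outcome N)) (f : outcome N -> T) :
  Pr p A = \sum_(k : T) Pr p (fun x => A x && (f x == k)).
Proof. by rewrite /Pr (partition_big f xpredT). Qed.

Lemma Pr_splitP (T : finType) p (E : pred (outcome N)) (B : pred T) (f : outcome N -> T) :
  Pr p (fun x => E x && B (f x)) = \sum_(k | B k) Pr p (fun x => E x && (f x == k)).
Proof.
rewrite (Pr_split _ _ f) [LHS](bigID B) /= [X in _ + X]big1 ?addr0.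
  apply: eq_bigr => k Bk; apply: Pr_ext => x.
  by case: (eqVneq (f x) k) => [E1|_]; rewrite ?andbT ?andbF // E1 Bk ?andbT ?andbF.
move=> k /negbTE Bk; apply: big_pred0 => x.
by case: (eqVneq (f x) k) => [E1|_]; rewrite ?andbT ?andbF // E1 Bk ?andbT ?andbF.
Qed.


Definition lat (x : outcome N) := (oS1 x, oS0 x, oY1 x, oY0 x).
Definition PR p r := Pr p (fun x => oR x == r).
Definition PRZ p r z := Pr p (fun x => (oR x == r) && (oZ x == z)).
Definition Mr p r (A : pred (outcome N)) := Pr p (fun x => (oR x == r) && A x).
Definition sz (z : bool) (l : bool * bool * bool * bool) := if z then l.1.1.1 else l.1.1.2.
Definition yz (z : bool) (l : bool * bool * bool * bool) := if z then l.1.2 else l.2.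

Lemma RND p r z (B : pred (bool * bool * bool * bool)) : randomization p ->
  Pr p (fun x => ((oR x == r) && (oZ x == z)) && B (lat x)) * PR p r
  = PRZ p r z * Mr p r (fun x => B (lat x)).
Proof.
move=> Hr; rewrite /Mr (Pr_splitP p _ _ lat) (Pr_splitP p (fun x => oR x == r) _ lat).
rewrite mulr_suml mulr_sumr; apply: eq_bigr => -[[[s1 s0] y1] y0] _.
have := Hr r z s1 s0 y1 y0; rewrite /PR /PRZ.
rewrite (Pr_ext _ (B := fun x => ((oR x == r) && (oZ x == z)) && (lat x == (s1, s0, y1, y0)))).
  rewrite (Pr_ext _ (A := fun x => [&& oR x == r, oS1 x == s1, oS0 x == s0, oY1 x == y1 & oY0 x == y0])
     (B := fun x => (oR x == r) && (lat x == (s1, s0, y1, y0)))) //.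
  by move=> x; rewrite /lat !xpair_eqE !andbA.
by move=> x; rewrite /lat !xpair_eqE !andbA.
Qed.

Lemma obs p q r z (B : pred (bool * bool)) : same_observed p q ->
  Pr p (fun x => ((oR x == r) && (oZ x == z)) && B (oS x, oY x))
  = Pr q (fun x => ((oR x == r) && (oZ x == z)) && B (oS x, oY x)).
Proof.
move=> Ho.
rewrite (Pr_splitP p _ _ (fun x => (oS x, oY x))) (Pr_splitP q _ _ (fun x => (oS x, oY x))).
apply: eq_bigr => -[s y] _.
have E : forall p', Pr p' (fun x => ((oR x == r) && (oZ x == z)) && ((oS x, oY x) == (s, y)))
   = Pr p' (fun x => [&& oR x == r, oZ x == z, oS x == s & oY x == y]).
  by move=> p'; apply: Pr_ext => x; rewrite !xpair_eqE !andbA.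
by rewrite !E Ho.
Qed.

Lemma PRZ_obs p q r z : same_observed p q -> PRZ p r z = PRZ q r z.
Proof.
move=> Ho; have := obs r z (fun _ => true) Ho.
by rewrite /PRZ !(Pr_ext _ (A := fun x => _ && true) (B := fun x => (oR x == r) && (oZ x == z))) // => x; rewrite andbT.
Qed.

Lemma PR_split p r : PR p r = PRZ p r true + PRZ p r false.
Proof.
rewrite /PR (Pr_bsplit _ _ (fun x => oZ x)) /PRZ; congr (_ + _); apply: Pr_ext => x.
  by rewrite eqb_id.
by rewrite eqbF_neg.
Qed.

Lemma PR_obs p q r : same_observed p q -> PR p r = PR q r.
Proof. by move=> Ho; rewrite !PR_split !(PRZ_obs _ _ Ho). Qed.

Lemma PRZ_gt0 p r z : base_assumptions p -> 0 < PRZ p r z.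
Proof.
case=> Hd _ _ _ [HR [HZ _]].
have PRpos := HR r; have /andP[c0 c1] := HZ r.
have ET : CPr p (fun x => oZ x) (fun x => oR x == r) = PRZ p r true / PR p r.
  by rewrite /CPr /PRZ /PR; congr (_ / _); apply: Pr_ext => x; rewrite eqb_id andbC.
rewrite ET in c0 c1.
have T0 : 0 < PRZ p r true.
  have -> : PRZ p r true = PRZ p r true / PR p r * PR p r.
    by rewrite mulfVK // gt_eqF.
  exact: mulr_gt0.
case: z; first exact: T0.
move: c1; rewrite ltr_pdivrMr // mul1r PR_split => c1.
by rewrite -(subr_gt0) in c1; move: c1; rewrite addrC addKr.
Qed.


Lemma Mid p q r z (B : pred (bool * bool)) :
  base_assumptions p -> base_assumptions q -> same_observed p q ->
  Mr p r (fun x => B (sz z (lat x), yz z (lat x)))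
  = Mr q r (fun x => B (sz z (lat x), yz z (lat x))).
Proof.
have key : forall p', base_assumptions p' ->
    Mr p' r (fun x => B (sz z (lat x), yz z (lat x)))
    = Pr p' (fun x => ((oR x == r) && (oZ x == z)) && B (oS x, oY x)) * PR p' r / PRZ p' r z.
  move=> p' Hb; have [_ Hr _ _ _] := Hb.
  rewrite -(Pr_ext _ (A := fun x => ((oR x == r) && (oZ x == z)) && (fun l => B (sz z l, yz z l)) (lat x))).
    by rewrite (@RND _ _ _ (fun l => B (sz z l, yz z l))) // [PRZ _ _ _ * _]mulrC mulfK // gt_eqF // PRZ_gt0.
  move=> x /=; case: (eqVneq (oZ x) z) => [<-|_]; rewrite ?andbF //.
by move=> Hp Hq Ho; rewrite !key // (obs r z B Ho) (PR_obs r Ho) (PRZ_obs r z Ho).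
Qed.

Definition mm p r u := Pr p (fun x => (oR x == r) && (oU x == u)).
Definition nn p z r u := Pr p (fun x => (oR x == r) && ((oU x == u) && oYz z x)).
Definition PU p u := Pr p (fun x => oU x == u).
Definition aa p z u := Pr p (fun x => (oU x == u) && oYz z x) / PU p u.

Lemma sbs0 p (A : pred (outcome N)) : base_assumptions p ->
  Pr p (fun x => A x && (oU x == u_sbs)) = 0.
Proof.
case=> Hd _ Hm _ _; apply: (Pr_sub0 Hd Hm) => x /andP[_].
by rewrite /oU /u_sbs xpair_eqE => /andP[/eqP-> /eqP->].
Qed.

Lemma PU_neq0 p u : base_assumptions p -> u != u_sbs -> PU p u != 0.
Proof. by case=> _ _ _ _ [_ [_ H]] Hu; rewrite gt_eqF // H. Qed.

Lemma hom p z r u : base_assumptions p -> u != u_sbs -> nn p z r u = mm p r u * aa p z u.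
Proof.
move=> Hb Hu; have [_ _ _ Hh _] := Hb; have := Hh z r u true.
rewrite (Pr_ext _ (A := fun x => [&& _, _ & _]) (B := fun x => (oR x == r) && ((oU x == u) && oYz z x))); last first.
  by move=> x; rewrite eqb_id.
rewrite (Pr_ext _ (A := fun x => (oU x == u) && (oYz z x == true)) (B := fun x => (oU x == u) && oYz z x)); last first.
  by move=> x; rewrite eqb_id.
move=> E; rewrite /aa mulrA -/(PU p u) -/(nn p z r u) -/(mm p r u) -E mulfK //.
exact: PU_neq0.
Qed.


Lemma bs p (A C P1 P2 : pred (outcome N)) :
  (forall x, A x && C x = P1 x) -> (forall x, A x && ~~ C x = P2 x) ->
  Pr p A = Pr p P1 + Pr p P2.
Proof. by move=> H1 H2; rewrite (Pr_bsplit _ _ C); congr (_ + _); apply: Pr_ext. Qed.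

Ltac bgrind r := let x := fresh "x" in intro x; simpl; rewrite /oU /oYz /u_ss /u_ssb /u_sbs /u_sbsb ?xpair_eqE;
  case: (oR x == r); case: (oS1 x); case: (oS0 x); case: (oY1 x); case: (oY0 x).

Lemma m1 p r : Mr p r (fun x => oS0 x == true)
  = mm p r u_ss + Pr p (fun x => (oR x == r) && (oU x == u_sbs)).
Proof. by apply: (@bs _ _ (fun x => oS1 x)); bgrind r. Qed.
Lemma m2 p r : Mr p r (fun x => oS1 x == false)
  = Pr p (fun x => (oR x == r) && (oU x == u_sbs)) + mm p r u_sbsb.
Proof. by apply: (@bs _ _ (fun x => oS0 x)); bgrind r. Qed.
Lemma m3 p r : Mr p r (fun x => oS1 x == true) = mm p r u_ss + mm p r u_ssb.
Proof. by apply: (@bs _ _ (fun x => oS0 x)); bgrind r. Qed.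
Lemma n1 p r : Mr p r (fun x => (oS1 x == true) && oY1 x)
  = nn p true r u_ss + nn p true r u_ssb.
Proof. by apply: (@bs _ _ (fun x => oS0 x)); bgrind r. Qed.
Lemma n2 p r : Mr p r (fun x => (oS1 x == false) && oY1 x)
  = Pr p (fun x => ((oR x == r) && oY1 x) && (oU x == u_sbs)) + nn p true r u_sbsb.
Proof. by apply: (@bs _ _ (fun x => oS0 x)); bgrind r. Qed.
Lemma n3 p r : Mr p r (fun x => (oS0 x == true) && oY0 x)
  = nn p false r u_ss + Pr p (fun x => ((oR x == r) && oY0 x) && (oU x == u_sbs)).
Proof. by apply: (@bs _ _ (fun x => oS1 x)); bgrind r. Qed.
Lemma n4 p r : Mr p r (fun x => (oS0 x == false) && oY0 x)
  = nn p false r u_ssb + nn p false r u_sbsb.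
Proof. by apply: (@bs _ _ (fun x => oS1 x)); bgrind r. Qed.


Lemma PR_gt0 p r : base_assumptions p -> 0 < PR p r.
Proof. by case=> _ _ _ _ [H _]; apply: H. Qed.

Lemma MidS1 p q r s : base_assumptions p -> base_assumptions q -> same_observed p q ->
  Mr p r (fun x => oS1 x == s) = Mr q r (fun x => oS1 x == s).
Proof. by move=> Hp Hq Ho; exact: (Mid r true (fun sy => sy.1 == s) Hp Hq Ho). Qed.
Lemma MidS0 p q r s : base_assumptions p -> base_assumptions q -> same_observed p q ->
  Mr p r (fun x => oS0 x == s) = Mr q r (fun x => oS0 x == s).
Proof. by move=> Hp Hq Ho; exact: (Mid r false (fun sy => sy.1 == s) Hp Hq Ho). Qed.
Lemma MidSY1 p q r s : base_assumptions p -> base_assumptions q -> same_observed p q ->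
  Mr p r (fun x => (oS1 x == s) && oY1 x) = Mr q r (fun x => (oS1 x == s) && oY1 x).
Proof. by move=> Hp Hq Ho; exact: (Mid r true (fun sy => (sy.1 == s) && sy.2) Hp Hq Ho). Qed.
Lemma MidSY0 p q r s : base_assumptions p -> base_assumptions q -> same_observed p q ->
  Mr p r (fun x => (oS0 x == s) && oY0 x) = Mr q r (fun x => (oS0 x == s) && oY0 x).
Proof. by move=> Hp Hq Ho; exact: (Mid r false (fun sy => (sy.1 == s) && sy.2) Hp Hq Ho). Qed.

Lemma mm_id p q r u : base_assumptions p -> base_assumptions q -> same_observed p q ->
  u != u_sbs -> mm p r u = mm q r u.
Proof.
move=> Hp Hq Ho Hu.
have Ess : mm p r u_ss = mm q r u_ss.
  have := MidS0 r true Hp Hq Ho.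
  by rewrite !m1 !(sbs0 (fun x => oR x == r)) // !addr0.
have Esbsb : mm p r u_sbsb = mm q r u_sbsb.
  have := MidS1 r false Hp Hq Ho.
  by rewrite !m2 !(sbs0 (fun x => oR x == r)) // !add0r.
have Essb : mm p r u_ssb = mm q r u_ssb.
  have := MidS1 r true Hp Hq Ho.
  by rewrite !m3 Ess => /addrI.
by move: u Hu => [[] []].
Qed.

Lemma lin1 (I : Type) (x : I -> R) (d : R) :
  (forall r, x r * d = 0) -> (exists r, x r != 0) -> d = 0.
Proof.
move=> H [r Hr]; have /eqP := H r.
by rewrite mulf_eq0 (negbTE Hr) => /eqP.
Qed.

Lemma lin2 (I : Type) (x y : I -> R) (d e : R) :
  (forall r, x r * d + y r * e = 0) ->
  (exists r1 r2, x r1 * y r2 != x r2 * y r1) -> d = 0 /\ e = 0.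
Proof.
move=> H [r1 [r2 Hne]].
have Hdet : x r1 * y r2 - x r2 * y r1 != 0 by rewrite subr_eq0.
have Hd : d * (x r1 * y r2 - x r2 * y r1)
    = y r2 * (x r1 * d + y r1 * e) - y r1 * (x r2 * d + y r2 * e) by ring.
have He : e * (x r1 * y r2 - x r2 * y r1)
    = x r1 * (x r2 * d + y r2 * e) - x r2 * (x r1 * d + y r1 * e) by ring.
rewrite !H !mulr0 subrr in Hd He.
move/eqP: Hd; move/eqP: He; rewrite !mulf_eq0 (negbTE Hdet) !orbF => /eqP-> /eqP->.
by [].
Qed.

Lemma PU_sum p u : PU p u = \sum_r mm p r u.
Proof.
rewrite /PU (Pr_split _ _ (fun x => oR x)); apply: eq_bigr => r _.
by apply: Pr_ext => x; rewrite andbC.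
Qed.

Lemma ex_mm p u : base_assumptions p -> u != u_sbs -> exists r, mm p r u != 0.
Proof.
move=> Hb Hu; have := PU_neq0 Hb Hu; rewrite PU_sum.
case: (pickP (fun r => mm p r u != 0)) => [r Hr|H]; first by exists r.
rewrite big1 ?eqxx // => r _; apply/eqP; by move: (H r) => /negbFE.
Qed.

Lemma pi_mm p u r : pi_ur p u r = mm p r u / PR p r.
Proof. by rewrite /pi_ur /CPr; congr (_ / _); apply: Pr_ext => x; rewrite andbC. Qed.


Lemma a1_id p q u : base_assumptions p -> base_assumptions q -> same_observed p q ->
  assump4a p -> u != u_sbs -> aa p true u = aa q true u.
Proof.
move=> Hp Hq Ho [r1 [r2 H4]] Hu.
have Em r v : v != u_sbs -> mm q r v = mm p r v by move=> Hv; rewrite (mm_id r Hp Hq Ho Hv).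
have E1 r : mm p r u_ss * (aa p true u_ss - aa q true u_ss)
          + mm p r u_ssb * (aa p true u_ssb - aa q true u_ssb) = 0.
  have := MidSY1 r true Hp Hq Ho; rewrite !n1 !(hom _ _ Hp) // !(hom _ _ Hq) // !Em //.
  by move=> H; rewrite !mulrBr addrACA -opprD H subrr.
have [D1 D2] : (aa p true u_ss - aa q true u_ss) = 0 /\ (aa p true u_ssb - aa q true u_ssb) = 0.
  apply: (lin2 (x := fun r => mm p r u_ss / PR p r) (y := fun r => mm p r u_ssb / PR p r)).
    move=> r /=; rewrite -[RHS](mul0r (PR p r)^-1) -(E1 r); ring.
  by exists r1, r2; rewrite -!pi_mm.
have D3 : aa p true u_sbsb - aa q true u_sbsb = 0.
  apply: (lin1 (x := fun r => mm p r u_sbsb)); last exact: ex_mm.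
  move=> r; have := MidSY1 r false Hp Hq Ho; rewrite !n2 !(sbs0 (fun x => (oR x == r) && oY1 x)) //.
  rewrite !add0r !(hom _ _ Hp) // !(hom _ _ Hq) // !Em // => H; rewrite mulrBr H subrr //.
by move: u Hu => [[] []] // _; apply/subr0_eq.
Qed.

Lemma a0_id p q u : base_assumptions p -> base_assumptions q -> same_observed p q ->
  assump4b p -> u != u_sbs -> aa p false u = aa q false u.
Proof.
move=> Hp Hq Ho [r1 [r2 H4]] Hu.
have Em r v : v != u_sbs -> mm q r v = mm p r v by move=> Hv; rewrite (mm_id r Hp Hq Ho Hv).
have E1 r : mm p r u_ssb * (aa p false u_ssb - aa q false u_ssb)
          + mm p r u_sbsb * (aa p false u_sbsb - aa q false u_sbsb) = 0.
  have := MidSY0 r false Hp Hq Ho; rewrite !n4 !(hom _ _ Hp) // !(hom _ _ Hq) // !Em //.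
  by move=> H; rewrite !mulrBr addrACA -opprD H subrr.
have [D1 D2] : (aa p false u_ssb - aa q false u_ssb) = 0 /\ (aa p false u_sbsb - aa q false u_sbsb) = 0.
  apply: (lin2 (x := fun r => mm p r u_ssb / PR p r) (y := fun r => mm p r u_sbsb / PR p r)).
    move=> r /=; rewrite -[RHS](mul0r (PR p r)^-1) -(E1 r); ring.
  by exists r1, r2; rewrite -!pi_mm.
have D3 : aa p false u_ss - aa q false u_ss = 0.
  apply: (lin1 (x := fun r => mm p r u_ss)); last exact: ex_mm.
  move=> r; have := MidSY0 r true Hp Hq Ho; rewrite !n3 !(sbs0 (fun x => (oR x == r) && oY0 x)) //.
  rewrite !addr0 !(hom _ _ Hp) // !(hom _ _ Hq) // !Em // => H; rewrite mulrBr H subrr //.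
by move: u Hu => [[] []] // _; apply/subr0_eq.
Qed.


Definition DD p z u := \sum_r PRZ p r z * mm p r u / PR p r.

Lemma pY_eq p z u : base_assumptions p -> u != u_sbs ->
  pY p z u = aa p z u * DD p z u / DD p z u.
Proof.
move=> Hb Hu; have [_ Hr _ _ _] := Hb.
have Hden : Pr p (fun x => (oZ x == z) && (oU x == u)) = DD p z u.
  rewrite (Pr_split _ _ (fun x => oR x)); apply: eq_bigr => r _.
  have PRne : PR p r != 0 by rewrite gt_eqF // PR_gt0.
  rewrite -[LHS](mulfK PRne).
  rewrite (Pr_ext _ (B := fun x => ((oR x == r) && (oZ x == z)) && (fun l => (l.1.1.1, l.1.1.2) == u) (lat x))); last first.
    by move=> x; rewrite andbC andbA.
  by rewrite (RND _ _ (fun l => (l.1.1.1, l.1.1.2) == u) Hr).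
have Hnum : Pr p (fun x => oY x && ((oZ x == z) && (oU x == u))) = aa p z u * DD p z u.
  rewrite /DD mulr_sumr (Pr_split _ _ (fun x => oR x)); apply: eq_bigr => r _.
  have PRne : PR p r != 0 by rewrite gt_eqF // PR_gt0.
  rewrite -[LHS](mulfK PRne).
  rewrite (Pr_ext _ (B := fun x => ((oR x == r) && (oZ x == z)) && (fun l => ((l.1.1.1, l.1.1.2) == u) && yz z l) (lat x))); last first.
    move=> x /=; case: (eqVneq (oZ x) z) => [<-|_]; rewrite ?andbF ?andFb //=.
    rewrite /oY /yz /lat /=; case: (oZ x); rewrite ?andbT;
    by case: (oR x == r); case: ((oS1 x, oS0 x) == u); case: (oY1 x); case: (oY0 x).
  rewrite (RND _ _ (fun l => ((l.1.1.1, l.1.1.2) == u) && yz z l) Hr).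
  have -> : Mr p r (fun x => (((lat x).1.1.1, (lat x).1.1.2) == u) && yz z (lat x)) = nn p z r u by [].
  rewrite hom //; ring.
by rewrite /pY /CPr Hnum Hden.
Qed.

Lemma ACE_eq p u : ACE p u = aa p true u - aa p false u.
Proof.
rewrite /ACE /aa -mulrBl /PU; congr (_ / _).
rewrite /Pr; under eq_bigr do rewrite mulrBl.
rewrite sumrB; congr (_ - _).
  rewrite (bigID (fun x => oY1 x)) /= [X in _ + X]big1 ?addr0.
    by apply: eq_bigr => x /andP[_ ->]; rewrite mul1r.
  by move=> x /andP[_ /negbTE->]; rewrite mul0r.
rewrite (bigID (fun x => oY0 x)) /= [X in _ + X]big1 ?addr0.
  by apply: eq_bigr => x /andP[_ ->]; rewrite mul1r.
by move=> x /andP[_ /negbTE->]; rewrite mul0r.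
Qed.

Lemma DD_id p q z u : base_assumptions p -> base_assumptions q -> same_observed p q ->
  u != u_sbs -> DD p z u = DD q z u.
Proof.
move=> Hp Hq Ho Hu; apply: eq_bigr => r _.
by rewrite (PRZ_obs r z Ho) (PR_obs r Ho) (mm_id r Hp Hq Ho Hu).
Qed.

End Aux.

Unset Implicit Arguments.

Theorem theorem1 (R : realFieldType) (N : nat) :
  forall u : bool * bool, u != u_sbs ->
  [/\ identifiable (fun p : outcome N -> R => base_assumptions p /\ assump4a p)
        (fun p => pY p true u),
      identifiable (fun p : outcome N -> R => base_assumptions p /\ assump4b p)
        (fun p => pY p false u)
    & identifiable
        (fun p : outcome N -> R => [/\ base_assumptions p, assump4a p & assump4b p])
        (fun p => ACE p u)].
Proof.
move=> u Hu; split.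
- move=> p q [Hp H4] [Hq _] Ho.
  by rewrite !pY_eq // (a1_id Hp Hq Ho H4 Hu) (DD_id true Hp Hq Ho Hu).
- move=> p q [Hp H4] [Hq _] Ho.
  by rewrite !pY_eq // (a0_id Hp Hq Ho H4 Hu) (DD_id false Hp Hq Ho Hu).
- move=> p q [Hp H4a H4b] [Hq _ _] Ho.
  by rewrite !ACE_eq (a1_id Hp Hq Ho H4a Hu) (a0_id Hp Hq Ho H4b Hu).
Qed.
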